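(* Let $R>1$, $C\geq1$ and $\delta\in(0,1)$. Let $h:[-1,1]\setminus\{0\}\to\mathbb R$ satisfy $h(x)\ll e^{|x|^{-1+\delta}}$ for $x\neq0$, and assume $|h(x)|\to\infty$ as $x\to0^\pm$ for some choice of sign $\pm$. Let $\xi:(0,1]\to(0,1]$ satisfy $\lim_{x\to0^+}\xi(x)=0$. Then there exist $\nu>0$ and $\psi:[1,\infty)\to\mathbb R_{>0}$ with $\lim_{t\to+\infty}\psi(t)=+\infty$ such that $$\sup_{(Cj^{1+\delta}\psi(1/z))^{-1}<|x|<1}\frac{|h(x)|}{R^j}<\inf_{0<\pm y\leq\xi(z)}\frac{|h(y)|}{\psi(1/z)}$$ for all integers $j\geq1$ and all $z\in(0,\nu]$.
   Context: In the infimum, $y$ ranges over reals with $0<y\le\xi(z)$ if the sign is $+$, and $0<-y\le\xi(z)$ if the sign is $-$, matching the side on which $|h|\to\infty$. *)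

(* Defs.v *)
From HB Require Import structures.
From mathcomp Require Import all_boot all_order all_algebra.
From mathcomp Require Import all_classical all_reals all_analysis.
Set Implicit Arguments. Unset Strict Implicit. Unset Printing Implicit Defensive.

(* Main.v *)
Set Warnings "-notation-overridden,-ambiguous-paths,-notation-incompatible-prefix".
From HB Require Import structures.
From mathcomp Require Import all_boot all_order all_algebra.
From mathcomp Require Import all_classical all_reals all_analysis.
From mathcomp Require Import ring lra.
Import Order.TTheory GRing.Theory Num.Theory.
Import numFieldNormedType.Exports.
Local Open Scope classical_set_scope.
Local Open Scope ring_scope.
Lemma jbound (R : realType) (L W m eps j : R) : 0 < L -> 1 <= W -> 1 <= m ->
  L^-1 <= m -> 0 < eps < 1 -> 1 <= j ->
  W * j `^ (1 - eps) <= L * j + (W * m) `^ (1 + eps^-1).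
Proof.
move=> L0 W1 m1 Lm /andP[e0 e1] j1.
have j0 : 0 < j by apply: lt_le_trans j1.
have W0 : 0 < W by apply: lt_le_trans W1.
have Lj : 0 <= L * j by rewrite mulr_ge0 // ltW.
case: (leP (W / L) (j `^ eps)) => hj.
- apply: (@le_trans _ _ (L * j)); last by rewrite lerDl powR_ge0.
  have : W <= L * j `^ eps by rewrite -ler_pdivrMl // mulrC.
  move=> hW; apply: (le_trans (ler_wpM2r (powR_ge0 _ _) hW)).
  rewrite -mulrA -powRD; last by apply/implyP => _; rewrite gt_eqF.
  by rewrite addrC subrK powRr1 // ltW.
- apply: (@le_trans _ _ ((W * m) `^ (1 + eps^-1))); last by rewrite lerDr.
  have Wm1 : 1 <= W * m by rewrite -[1]mulr1 ler_pM.
  have hjle : j <= (W * m) `^ eps^-1.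
    have -> : j = (j `^ eps) `^ eps^-1.
      by rewrite -powRrM mulfV ?gt_eqF // powRr1 // ltW.
    apply: ge0_ler_powR; rewrite ?invr_ge0 ?ltW //.
    + by rewrite nnegrE powR_ge0.
    + by rewrite nnegrE (le_trans ler01 Wm1).
    by apply: (lt_le_trans hj); rewrite ler_pM2l.
  rewrite [X in _ <= X]powRD; last first.
    by apply/implyP => _; rewrite gt_eqF // (lt_le_trans ltr01 Wm1).
  rewrite powRr1; last by apply: (le_trans ler01 Wm1).
  apply: ler_pM; rewrite ?powR_ge0 //; first exact: ltW.
  - by rewrite -{1}[W]mulr1 ler_pM2l.
  apply: le_trans hjle; apply: ler1_powR => //.
  by rewrite lerBlDr lerDl ltW.
Qed.
Arguments jbound {R L W m eps j}.

Lemma ex_right (R : realType) (P : R -> Prop) :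
  (\forall t \near 0^'+, P t) -> exists2 e : R, 0 < e & forall t, 0 < t < e -> P t.
Proof.
move=> /nbhs_ballP [e e0 He]; exists e => // t /andP[t0 te].
apply: He => //; rewrite /ball /= sub0r normrN gtr0_norm //.
Qed.

Arguments ex_right {R P}.

Definition Finf (R : realType) (h xi : R -> R) (s z : R) :=
  inf [set `|h (s * t)| | t in [set t | 0 < t <= xi z]].
Arguments Finf {R}.

Lemma Finf_le (R : realType) (h xi : R -> R) (s z y : R) :
  (s = 1 \/ s = -1) -> 0 < s * y <= xi z -> Finf h xi s z <= `|h y|.
Proof.
move=> hs hy.
have -> : y = s * (s * y).
  by rewrite mulrA; case: hs => ->; rewrite ?mulr1 ?mulrNN ?mul1r.

apply: ge_inf; last by exists (s * y).
by exists 0 => _ [t _ <-].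
Qed.

Arguments Finf_le {R h xi s z y}.

Lemma Fbig (R : realType) (h xi : R -> R) (s : R) :
  (`|h (s * t)| @[t --> 0^'+] --> +oo) ->
  (forall x : R, 0 < x <= 1 -> 0 < xi x <= 1) ->
  (xi x @[x --> 0^'+] --> 0) ->
  forall M : R, exists nu : R, [/\ 0 < nu, nu <= 1 &
     forall z, 0 < z <= nu -> M <= Finf h xi s z].
Proof.
move=> Hh Hxi Hxi0 M.
have [eta eta0 Heta] := ex_right (cvgry_ge Hh M).
have [nu' nu'0 Hnu] := ex_right (@cvgr_dist_lt _ _ _ _ _ xi 0 Hxi0 _ eta0).
exists (Num.min (nu' / 2) 1); split.
- rewrite lt_min; apply/andP; split => //; exact: divr_gt0.
- by rewrite ge_min lexx orbT.
move=> z /andP[z0 zle].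
have z1 : z <= 1 by apply: (le_trans zle); rewrite ge_min lexx orbT.
have zn : z < nu'.
  apply: (le_lt_trans zle); rewrite gt_min; apply/orP; left.
  by rewrite ltr_pdivrMr // ltr_pMr // ltr1n.
have /andP[xi0 xi1] := Hxi z (andb_true_intro (conj z0 z1)).
have := Hnu z (andb_true_intro (conj z0 zn)); rewrite sub0r normrN gtr0_norm // => xieta.
apply: lb_le_inf.
  by exists `|h (s * xi z)|, (xi z) => //; apply/andP; split => //.
move=> _ [t /andP[t0 txi] <-].
apply: Heta; rewrite t0 /=.
exact: (le_lt_trans txi xieta).
Qed.
Arguments Fbig {R h xi s}.

Theorem lemma3p11 (R : realType) (Rb C delta : R) (h xi : R -> R) (s : R) :
  1 < Rb -> 1 <= C -> 0 < delta < 1 ->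
  (exists K : R, forall x : R, -1 <= x <= 1 -> x != 0 ->
     `|h x| <= K * expR (`|x| `^ (delta - 1))) ->
  (s = 1 \/ s = -1) ->
  (`|h (s * t)| @[t --> 0^'+] --> +oo) ->
  (forall x : R, 0 < x <= 1 -> 0 < xi x <= 1) ->
  (xi x @[x --> 0^'+] --> 0) ->
  exists (nu : R) (psi : R -> R),
    0 < nu <= 1 /\
    (forall t : R, 1 <= t -> 0 < psi t) /\
    (psi t @[t --> +oo] --> +oo) /\
    forall (j : nat) (z : R), (1 <= j)%N -> 0 < z <= nu ->
      (ereal_sup [set (`|h x| / Rb ^+ j)%:E | x in
          [set x : R | ((C * (j%:R `^ (1 + delta)) * psi z^-1)^-1 < `|x| < 1)%R]]
       < ereal_inf [set (`|h y| / psi z^-1)%:E | y in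
          [set y : R | (0 < s * y <= xi z)%R]])%E.
Proof.
move=> Rb1 C1 /andP[d0 d1] [K HK] hs Hh Hxi Hxi0.
have Rb0 : 0 < Rb by apply: lt_trans Rb1.
have C0 : 0 < C by apply: lt_le_trans C1.
set L := ln Rb.
have L0 : 0 < L by apply: ln_gt0.
set m := 1 + L^-1.
have Li0 : 0 <= L^-1 by rewrite invr_ge0 ltW.
have m1 : 1 <= m by rewrite lerDl.
have m0 : 0 < m by apply: lt_le_trans m1.
have Lm : L^-1 <= m by rewrite lerDr.
set eps := delta * delta.
have eps0 : 0 < eps by rewrite mulr_gt0.
have eps1 : eps < 1.
  by rewrite -[1]mulr1; apply: ltr_pM; rewrite ?ltW.
set e := 1 + eps^-1.
have e1 : 1 <= e by rewrite lerDl invr_ge0 ltW.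
have e0 : 0 < e by apply: lt_le_trans e1.
set K0 := `|K|.
have K00 : 0 <= K0 by rewrite normr_ge0.
pose Vf (u : R) := Num.max m ((ln u / 4) `^ e^-1).
have Vfm : forall u, m <= Vf u by move=> u; rewrite le_max lexx.
have powK : forall b, 0 <= b -> (b `^ e) `^ e^-1 = b.
  by move=> b b0; rewrite -powRrM mulfV ?gt_eqF // powRr1.
have powK' : forall b, 0 <= b -> (b `^ e^-1) `^ e = b.
  by move=> b b0; rewrite -powRrM mulVf ?gt_eqF // powRr1.
have Vflow : forall u b, 0 <= b -> expR (4 * b `^ e) <= u -> b <= Vf u.
  move=> u b b0 hu.
  have u0 : 0 < u by apply: lt_le_trans hu; apply: expR_gt0.
  rewrite le_max; apply/orP; right.
  have := hu; rewrite -(ler_ln (expR_gt0 _)) ?posrE // expRK => hl.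
  rewrite -{1}(powK b b0); apply: ge0_ler_powR.
  - by rewrite invr_ge0 ltW.
  - by rewrite nnegrE powR_ge0.
  - rewrite nnegrE; apply: divr_ge0 => //; apply: le_trans hl.
    by rewrite mulr_ge0 // powR_ge0.
  - by rewrite ler_pdivlMr // mulrC.
pose psi t := Vf (Finf h xi s t^-1) / (m * C).
have psi0 : forall t, 0 < psi t.
  by move=> t; rewrite divr_gt0 ?mulr_gt0 //; apply: lt_le_trans (Vfm _).
set T := expR (4 * m `^ e + 2 * K0).
have [nu [nu0 nu1 Hnu]] := Fbig Hh Hxi Hxi0 T.
exists nu, psi; split; first by rewrite nu0 nu1.
split; first by move=> t _; apply: psi0.
split.
  apply/cvgryPge => A.
  set B := `|A| * (m * C).
  have B0 : 0 <= B by rewrite mulr_ge0 // mulr_ge0 // ltW.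
  have [nuM [nuM0 nuM1 HM]] := Fbig Hh Hxi Hxi0 (expR (4 * B `^ e)).
  exists nuM^-1; split; first by rewrite num_real.
  move=> t tgt.
  have t0 : 0 < t by apply: lt_trans tgt; rewrite invr_gt0.
  have hz : 0 < t^-1 <= nuM.
    rewrite invr_gt0 t0 /= -[nuM]invrK lef_pV2 ?posrE ?invr_gt0 //.
    exact: ltW.
  have := Vflow _ _ B0 (HM _ hz); rewrite /psi => hV.
  apply: (le_trans (ler_norm A)).
  by rewrite ler_pdivlMr ?mulr_gt0.
move=> j z j1 /andP[z0 zn].
have hT := Hnu z (andb_true_intro (conj z0 zn)).
rewrite /psi invrK.
set u := Finf h xi s z in hT *.
have u0 : 0 < u by apply: lt_le_trans hT; apply: expR_gt0.
have lnu : 4 * m `^ e + 2 * K0 <= ln u.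
  by have := hT; rewrite -(ler_ln (expR_gt0 _)) ?posrE // expRK.
set a := ln u / 4.
have a4 : ln u = 4 * a by rewrite /a mulrC divfK.
have me1 : 1 <= m `^ e by apply: (le_trans m1); apply: le1r_powR.
have ame : m `^ e <= a by lra.
have a0 : 0 <= a by lra.
have aK : K0 <= 2 * a by lra.
set V := a `^ e^-1.
have mV : m <= V.
  rewrite /V -{1}(powK m (ltW m0)); apply: ge0_ler_powR => //.
  - by rewrite invr_ge0 ltW.
  - by rewrite nnegrE powR_ge0.
have VfV : Vf u = V.
  by rewrite /Vf /V; apply/max_idPr.
rewrite VfV.
have V1 : 1 <= V by apply: le_trans mV.
have V0 : 0 < V by apply: lt_le_trans V1.
have Ve : V `^ e = a by rewrite /V powK'.
set P := V / (m * C).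
have P0 : 0 < P by rewrite divr_gt0 // mulr_gt0.
set W := V / m.
have W1 : 1 <= W by rewrite /W ler_pdivlMr // mul1r.
have W0 : 0 < W by apply: lt_le_trans W1.
have CP : C * P = W by rewrite /P /W; field; rewrite gt_eqF // gt_eqF.
have PV : P <= V.
  rewrite /P ler_pdivrMr ?mulr_gt0 // ler_peMr.
  - by [].
  - exact: ltW.
  by rewrite -[1]mulr1; apply: ler_pM.
have Pa : P <= a by rewrite -Ve; apply: (le_trans PV); apply: le1r_powR.
have j1' : 1 <= (j%:R : R) by rewrite ler1n.
have j0 : 0 < (j%:R : R) by apply: lt_le_trans j1'.
apply: (@le_lt_trans _ _ (K0 * expR a)%:E).
  apply: ge_ereal_sup => _ [x /andP[hx1 hx2] <-].
  rewrite lee_fin.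
  set Y := C * j%:R `^ (1 + delta) * P in hx1.
  have YE : Y = W * j%:R `^ (1 + delta) by rewrite /Y -CP; ring.
  have Y0 : 0 < Y.
    have jp : 1 <= j%:R `^ (1 + delta).
      by apply: (le_trans j1' (le1r_powR j1' _)); rewrite lerDl ltW.
    by rewrite YE mulr_gt0 // (lt_le_trans ltr01 jp).
  have x0 : 0 < `|x| by apply: lt_trans hx1; rewrite invr_gt0.
  have xne : x != 0 by rewrite -normr_gt0.
  have xin : -1 <= x <= 1.
    by have := hx2; rewrite ltr_norml => /andP[h1 h2]; rewrite !ltW.
  have Rj : 0 < Rb ^+ j := exprn_gt0 _ Rb0.
  rewrite ler_pdivrMr //.
  apply: (le_trans (HK x xin xne)).
  apply: (le_trans (ler_wpM2r (ltW (expR_gt0 _)) (ler_norm K))).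
  rewrite -mulrA; apply: ler_wpM2l => //.
  have RbE : Rb ^+ j = expR (j%:R * L) by rewrite expRM_natl /L lnK // posrE.
  rewrite RbE -expRD ler_expR.
  have step1 : `|x| `^ (delta - 1) <= Y `^ (1 - delta).
    have -> : delta - 1 = (-1) * (1 - delta) by ring.
    rewrite powRrM powR_inv1 ?normr_ge0 //.
    apply: ge0_ler_powR.
    - by rewrite subr_ge0 ltW.
    - by rewrite nnegrE invr_ge0 normr_ge0.
    - by rewrite nnegrE ltW.
    - by rewrite -[Y]invrK lef_pV2 ?posrE ?invr_gt0 //; apply: ltW.
  have step2 : Y `^ (1 - delta) <= W * j%:R `^ (1 - eps).
    rewrite YE powRM; [|exact: ltW W0|exact: powR_ge0].
    rewrite -powRrM.
    have -> : (1 + delta) * (1 - delta) = 1 - eps by rewrite /eps; ring.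
    apply: ler_wpM2r; first exact: powR_ge0.
    by apply: ler1_powR => //; rewrite lerBlDr lerDl ltW.
  have step3 := jbound L0 W1 m1 Lm (andb_true_intro (conj eps0 eps1)) j1'.
  rewrite (_ : W * m = V) in step3; last by rewrite /W divfK // gt_eqF.
  rewrite Ve in step3.
  apply: (le_trans step1 (le_trans step2 (le_trans step3 _))).
  by rewrite addrC mulrC.
apply: (@lt_le_trans _ _ (u / P)%:E).
  rewrite lte_fin ltr_pdivlMr //.
  have e2a : K0 <= expR (2 * a).
    by apply: (le_trans aK); apply: le_trans (expR_ge1Dx _); rewrite lerDr.
  have ea : P < expR a.
    by apply: (le_lt_trans Pa); apply: lt_le_trans (expR_ge1Dx _); rewrite ltrDr.
  apply: (@le_lt_trans _ _ (expR (2 * a) * expR a * P)).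
    by apply: ler_wpM2r; [exact: ltW | apply: ler_wpM2r; [exact: ltW (expR_gt0 _) | ]].
  have uE : u = expR (2 * a) * expR a * expR a.
    rewrite -!expRD (_ : 2 * a + a + a = ln u); first by rewrite lnK ?posrE.
    by rewrite /a; field.
  by rewrite uE ltr_pM2l ?mulr_gt0 ?expR_gt0.
apply: le_ereal_inf_tmp => _ [y hy <-].
rewrite lee_fin ler_pM2r ?invr_gt0 //.
exact: Finf_le.
Qed.
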